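(* The rolling sieve is $O(\log n/\log\log n)$-incremental.
   Context: Model of computation: a RAM where, for input $n$, arithmetic operations on integers of $O(\log n)$ bits and other basic operations have unit cost. A sieve (an algorithm listing primes in increasing order) is $t(n)$-incremental if, in the worst case, after having found all primes up to $n$, it requires $(p-n)\cdot t(n)+O(1)$ operations to find $p$, the smallest prime exceeding $n$. The rolling sieve is the following algorithm. Its data structure is a circular array $T[0..\Delta-1]$ of stacks (linked lists). Initialization with a starting value $\mathrm{start}$: set $r=\lfloor\sqrt{\mathrm{start}}\rfloor+1$, $s=r^2$, $\Delta=r+2$, all stacks empty; for each prime $p\le r-1$ push $p$ onto stack $T[(p-(\mathrm{start}\bmod p))\bmod p]$; set $\mathrm{pos}=0$, $m=\mathrm{start}$. The procedure next() does: set isPrime = true; while $T[\mathrm{pos}]$ is nonempty, pop $p$ from it, push $p$ onto $T[(\mathrm{pos}+p)\bmod\Delta]$, and set isPrime = false; then if $m=s$: if isPrime is true, push $r$ onto $T[(\mathrm{pos}+r)\bmod\Delta]$ and set isPrime = false; in any case set $r=r+1$, $s=r^2$; then set $m=m+1$, $\mathrm{pos}=(\mathrm{pos}+1)\bmod\Delta$, and if $\mathrm{pos}=0$ increase $\Delta$ by $2$ (appending two new empty stacks); return isPrime (which reports whether the old value of $m$ is prime). The next prime after the current position is found by calling next() repeatedly until it returns true. The sieve is initialized with $\mathrm{start}=100$, the primes up to $100$ being output directly. *)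

(* Defs.v *)
From mathcomp Require Import all_boot.
From Stdlib Require Import Reals.

Set Implicit Arguments.
Unset Strict Implicit.
Unset Printing Implicit Defensive.

(* State of the rolling sieve.  The circular array of stacks T[0..delta-1]
   is modelled as a function nat -> seq nat (head of the list = top). *)
Record rs_state := RS {
  rs_T : nat -> seq nat;
  rs_delta : nat;
  rs_pos : nat;
  rs_m : nat;
  rs_r : nat;
  rs_s : nat }.

Definition isqrt (n : nat) : nat := find (fun i => n < i.+1 * i.+1) (iota 0 n.+1).

Definition push (p k : nat) (T : nat -> seq nat) : nat -> seq nat :=
  fun j => if j == k then p :: T j else T j.

Definition clear (k : nat) (T : nat -> seq nat) : nat -> seq nat :=
  fun j => if j == k then [::] else T j.

Definition rs_init (start : nat) : rs_state :=
  let r := (isqrt start).+1 in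
  let T := foldl (fun T p => push p ((p - start %% p) %% p) T)
                 (fun _ => [::]) [seq p <- iota 0 r | prime p] in
  RS T (r + 2) 0 start r (r * r).

(* One call of next(): returns the new state, the boolean isPrime
   (whether the old m is prime) and the number of unit operations used,
   counted as (number of pops) + 1: each pop/push iteration of the while
   loop costs O(1) and the rest of the procedure costs O(1). *)
Definition rs_next (st : rs_state) : rs_state * bool * nat :=
  let: RS T delta pos m r s := st in
  let l := T pos in
  let T1 := foldl (fun T p => push p ((pos + p) %% delta) T) (clear pos T) l in
  let isP := nilp l in
  let: (T2, isP2, r2, s2) :=
     if m == s then
       let T2 := if isP then push r ((pos + r) %% delta) T1 else T1 in
       (T2, false, r.+1, r.+1 * r.+1)
     else (T1, isP, r, s) in
  let m3 := m.+1 in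
  let pos3 := pos.+1 %% delta in
  let: (T3, delta3) :=
     if pos3 == 0 then (clear delta.+1 (clear delta T2), delta + 2)
     else (T2, delta) in
  (RS T3 delta3 pos3 m3 r2 s2, isP2, size l + 1).

Definition rs_iter (k : nat) (st : rs_state) : rs_state :=
  iter k (fun st => (rs_next st).1.1) st.

Definition rs_result (st : rs_state) (i : nat) : bool :=
  (rs_next (rs_iter i st)).1.2.

Definition rs_cost (st : rs_state) (k : nat) : nat :=
  \sum_(i < k) (rs_next (rs_iter i st)).2.

(* The sieve initialized with start = 100, after having processed
   (i.e. found all primes among) all integers up to n, n >= 99:
   exactly n + 1 - 100 calls of next() have been made, so m = n + 1. *)
Definition rs_after (n : nat) : rs_state := rs_iter (n.+1 - 100) (rs_init 100).

(* Main.v *)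
Require Import Defs.
From mathcomp Require Import all_boot zify.

Set Implicit Arguments.
Unset Strict Implicit.
Unset Printing Implicit Defensive.


Definition dist (q m : nat) := (q - m %% q) %% q.

Lemma dist_lt q m : 0 < q -> dist q m < q.
Proof. by move=> q0; rewrite /dist ltn_mod. Qed.

Lemma dist_dvd q m : 0 < q -> q %| m + dist q m.
Proof.
move=> q0; rewrite /dist; have := ltn_mod m q; rewrite q0 => lt.
case E: (m %% q) lt => [|a] lt.
  by rewrite subn0 modnn addn0 /dvdn E.
rewrite (@modn_small (q - a.+1)); last by lia.
by rewrite /dvdn -modnDml E subnKC ?modnn // ltnW.
Qed.

Lemma dist_uniq q m d : 0 < q -> d < q -> q %| m + d -> dist q m = d.
Proof.
move=> q0 dq; rewrite /dist /dvdn -modnDml.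
have := ltn_mod m q; rewrite q0.
case E: (m %% q) => [|a] lt.
  by rewrite add0n modn_small // subn0 modnn => /eqP.
have Hs: a.+1 + d < 2 * q by lia.
case: (ltnP (a.+1 + d) q) => H.
  by rewrite modn_small // => /eqP; lia.
rewrite -(subnK H) modnDr modn_small; last by lia.
move=> /eqP H2. rewrite modn_small; lia.
Qed.

Lemma dist0 q m : 0 < q -> (dist q m == 0) = (q %| m).
Proof.
move=> q0; apply/eqP/idP => [H|H]; first by have := dist_dvd m q0; rewrite H addn0.
by apply: dist_uniq; rewrite ?addn0.
Qed.

Lemma dist_succ q m : 0 < q ->
  dist q m.+1 = if dist q m == 0 then q.-1 else (dist q m).-1.
Proof.
move=> q0; have dl := dist_lt m q0; have dd := dist_dvd m q0.
case: eqP => E.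
  apply: dist_uniq; [done | lia | ].
  rewrite E addn0 in dd. rewrite addSnnS prednK // dvdn_addr // dvdnn.
apply: dist_uniq; [done | lia | ].
by rewrite addSnnS prednK //; lia.
Qed.

Lemma mod_sum D pos d : pos < D -> d < D ->
  (pos + d) %% D = if pos + d < D then pos + d else pos + d - D.
Proof.
move=> pD dD; case: ifP => H; first by rewrite modn_small.
have H': D <= pos + d by lia.
rewrite -(subnK H') modnDr modn_small //; lia.
Qed.

Lemma foldl_push_eq (f : nat -> nat) l T0 j :
  foldl (fun T p => push p (f p) T) T0 l j = rev [seq p <- l | j == f p] ++ T0 j.
Proof.
elim: l T0 => [|x l IH] T0 //=.
rewrite IH /push; case: (j == f x) => //.
by rewrite rev_cons cat_rcons.
Qed.

Lemma pos_eqmod D pos d : pos < D -> d < D -> (pos == (pos + d) %% D) = (d == 0).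
Proof. by move=> pD dD; rewrite mod_sum //; case: ifP => H; apply/eqP/eqP; lia. Qed.

Definition Tinv (T : nat -> seq nat) D pos m r :=
  forall j, j < D -> uniq (T j) /\
    forall q, (q \in T j) = [&& prime q, q < r & j == (pos + dist q m) %% D].

Definition T1of (T : nat -> seq nat) D pos :=
  foldl (fun T0 p => push p ((pos + p) %% D) T0) (clear pos T) (T pos).

Lemma T1_spec T D pos m r : pos < D -> r <= D -> Tinv T D pos m r ->
  forall j, j < D -> uniq (T1of T D pos j) /\
    forall q, (q \in T1of T D pos j) =
       [&& prime q, q < r & j == (pos.+1 + dist q m.+1) %% D].
Proof.
move=> pD rD HT j jD.
have [uP HP] := HT pos pD; have [uj Hj] := HT j jD.
have Hpos q : (q \in T pos) = [&& prime q, q < r & q %| m].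
  rewrite HP; case pq: (prime q) => //=; case qr: (q < r) => //=.
  by rewrite pos_eqmod ?dist0 ?prime_gt0 //; apply: leq_trans (dist_lt _ (prime_gt0 pq)) _; lia.
rewrite /T1of foldl_push_eq /clear; split.
  rewrite cat_uniq rev_uniq filter_uniq //=; case: eqP => [_|/eqP jp] /=; first by [].
  apply/andP; split => //; apply/hasPn => x Hx.
  move: Hx; rewrite Hj => /and3P [px xr /eqP jE].
  rewrite mem_rev mem_filter Hpos px xr /=; apply/negP => /andP [_ xm].
  move: xm; rewrite -(dist0 m (prime_gt0 px)) => /eqP d0.
  by move: jp; rewrite jE d0 addn0 modn_small // eqxx.
move=> q; rewrite mem_cat mem_rev mem_filter Hpos.
case pq: (prime q); last first.
  by case: ifP => _; rewrite ?in_nil ?Hj ?pq ?andbF.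
case qr: (q < r); last first.
  by case: ifP => _; rewrite ?in_nil ?Hj ?pq ?qr ?andbF.
have q0 := prime_gt0 pq; have dl := dist_lt m q0.
rewrite dist_succ // -(dist0 m q0) /=.
have dD : dist q m < D by lia.
case d0: (dist q m == 0); case: ifP => [/eqP jp|/negbT jp].
- by rewrite in_nil orbF andbT addSnnS prednK // jp.
- rewrite Hj pq qr (eqP d0) addn0 (modn_small pD) (negbTE jp) orbF andbT.
  by rewrite addSnnS prednK.
- rewrite in_nil andbF /= addSnnS prednK; last by move/negbT: d0; lia.
  by rewrite jp pos_eqmod // d0.
- rewrite andbF Hj pq qr /= addSnnS prednK //; by move/negbT: d0; lia.
Qed.

Lemma Tpos_mem T D pos m r : pos < D -> r <= D -> Tinv T D pos m r ->
  forall q, (q \in T pos) = [&& prime q, q < r & q %| m].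
Proof.
move=> pD rD HT q; have [_ HP] := HT pos pD.
rewrite HP; case pq: (prime q) => //=; case qr: (q < r) => //=.
by rewrite pos_eqmod ?dist0 ?prime_gt0 //; apply: leq_trans (dist_lt _ (prime_gt0 pq)) _; lia.
Qed.

Lemma nilp_iff (l : seq nat) r m : (forall q, (q \in l) = [&& prime q, q < r & q %| m]) ->
  nilp l <-> (forall q, prime q -> q < r -> ~~ (q %| m)).
Proof.
move=> Hl; split.
  by case: l Hl => // Hl _ q pq qr; apply/negP => qm; have := Hl q; rewrite pq qr qm.
case: l Hl => // x l Hl H; have := Hl x; rewrite inE eqxx /= => /esym /and3P [px xr xm].
by have := H x px xr; rewrite xm.
Qed.

Lemma prime_iff r m : 11 <= r -> (r-1) * (r-1) <= m -> m < r * r ->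
  prime m <-> (forall q, prime q -> q < r -> ~~ (q %| m)).
Proof.
move=> r11 lo hi; split.
  move=> pm q pq qr; apply/negP => qm.
  move: qm; rewrite dvdn_prime2 // => /eqP E; subst q; nia.
move=> H; apply/negPn/negP => /primePns [|[p [pp p2 pm]]]; first by nia.
have pr : p < r by rewrite expnS expn1 in p2; nia.
by have := H p pp pr; rewrite pm.
Qed.

Lemma prime_sq r : 2 <= r ->
  prime r <-> (forall q, prime q -> q < r -> ~~ (q %| r * r)).
Proof.
move=> r2; split.
  move=> pr q pq qr; rewrite Euclid_dvdM // orbb dvdn_prime2 //; apply/negP => /eqP E; lia.
move=> H; apply/negPn/negP => /primePns [|[p [pp p2 pm]]]; first by lia.
have pr : p < r.
  rewrite ltn_neqAle (dvdn_leq _ pm) ?andbT; last by lia.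
  apply/negP => /eqP E; subst p; rewrite expnS expn1 in p2; nia.
by have := H p pp pr; rewrite (dvdn_mulr _ pm).
Qed.

Lemma prime_sqF r : 2 <= r -> prime (r * r) = false.
Proof.
move=> r2; apply/negP => pr.
have : r %| r * r by rewrite dvdn_mulr.
have r1 : r != 1 by lia.
move/(prime_nt_dvdP pr r1); nia.
Qed.

Definition inv (st : rs_state) : Prop :=
  match st with RS T D pos m r s =>
  [/\ s = r * r, (r-1) * (r-1) <= m, m <= r * r, 11 <= r &
   [/\ pos < D, 13 <= D, pos <= m, 4 * (m - pos) = (D-1) * (D-1) + 256 &
       Tinv T D pos m r]] end.

Lemma r_lt_D D pos m r : (r-1) * (r-1) <= m -> pos < D -> 13 <= D -> pos <= m ->
  4 * (m - pos) = (D-1) * (D-1) + 256 -> r < D.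
Proof. move=> *; nia. Qed.

Lemma next_Tinv T2 D pos m r2 : pos < D -> r2 <= D ->
  (forall j, j < D -> uniq (T2 j) /\ forall q, (q \in T2 j) =
      [&& prime q, q < r2 & j == (pos.+1 + dist q m.+1) %% D]) ->
  if pos.+1 %% D == 0 then Tinv (clear D.+1 (clear D T2)) (D+2) 0 m.+1 r2
  else Tinv T2 D (pos.+1 %% D) m.+1 r2.
Proof.
move=> pD rD H; case: ifP => E.
  have pD' : pos.+1 = D.
    case: (ltnP pos.+1 D) => h; last by lia.
    by move: E; rewrite modn_small.
  move=> j jD; rewrite /clear.
  case: eqP => [jE|jE].
    split => // q; rewrite in_nil; apply/esym/and3P => [[pq qr /eqP jq]].
    have := dist_lt m.+1 (prime_gt0 pq) => dl.
    rewrite add0n modn_small in jq; lia.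
  case: eqP => [jE'|jE'].
    split => // q; rewrite in_nil; apply/esym/and3P => [[pq qr /eqP jq]].
    have := dist_lt m.+1 (prime_gt0 pq) => dl.
    rewrite add0n modn_small in jq; lia.
  have jD' : j < D by lia.
  have [u Hm] := H j jD'; split => // q; rewrite Hm.
  case pq: (prime q) => //=; case qr: (q < r2) => //=.
  have := dist_lt m.+1 (prime_gt0 pq) => dl.
  by rewrite pD' modnDl add0n !modn_small //; lia.
have pD' : pos.+1 < D.
  case: (ltnP pos.+1 D) => h //.
  have E2 : pos.+1 = D by lia.
  by rewrite E2 modnn in E.
by rewrite (modn_small pD').
Qed.

Lemma T2_spec_s T D pos r : pos < D -> r < D -> 11 <= r -> Tinv T D pos (r * r) r ->
  forall j, j < D ->
  uniq ((if nilp (T pos) then push r ((pos + r) %% D) (T1of T D pos) else T1of T D pos) j) /\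
  forall q, (q \in (if nilp (T pos) then push r ((pos + r) %% D) (T1of T D pos) else T1of T D pos) j) =
    [&& prime q, q < r.+1 & j == (pos.+1 + dist q (r * r).+1) %% D].
Proof.
move=> pD rD r11 HT j jD.
have HT1 := T1_spec pD (ltnW rD) HT.
have Hpos := Tpos_mem pD (ltnW rD) HT.
have Hn := nilp_iff Hpos.
have [u1 H1] := HT1 j jD.
have dr : dist r (r * r).+1 = r.-1.
  have d0 : dist r (r * r) == 0 by rewrite dist0 ?(dvdn_mulr _ (dvdnn r)) //; lia.
  by rewrite dist_succ ?d0 //; lia.
case pr: (prime r).
  have -> : nilp (T pos) by apply/(proj2 Hn)/(proj1 (prime_sq _)) => //; lia.
  rewrite /push; case: eqP => [jE|jE].
    split.
      rewrite /= u1 andbT H1 pr /=; by rewrite ltnn.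
    move=> q; rewrite inE H1 (ltnS q r) (leq_eqVlt q r).
    case: (eqVneq q r) => [->|qr] /=; first by rewrite pr dr addSnnS prednK ?jE ?eqxx //; lia.
    done.
  split => // q; rewrite H1 (ltnS q r) (leq_eqVlt q r).
  case: (eqVneq q r) => [->|qr] //=; rewrite pr dr addSnnS prednK //; last by lia.
  by rewrite ltnn; move/eqP/negbTE: jE => ->.
have -> : nilp (T pos) = false.
  apply/negP => /(proj1 Hn) H; move: pr; rewrite (proj2 (prime_sq _)) //; lia.
split => // q; rewrite H1 (ltnS q r) (leq_eqVlt q r).
by case: (eqVneq q r) => [->|qr] //=; rewrite pr.
Qed.

Lemma step_ok T D pos m r s : inv (RS T D pos m r s) ->
  [/\ inv (rs_next (RS T D pos m r s)).1.1, rs_m (rs_next (RS T D pos m r s)).1.1 = m.+1,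
      (rs_next (RS T D pos m r s)).1.2 = prime m &
      (rs_next (RS T D pos m r s)).2 <= size (primes m) + 1].
Proof.
move=> [Hs H1 H2 H11 [HpD HD Hpm Hinv HT]].
have rD : r < D by exact: (r_lt_D H1 HpD HD Hpm Hinv).
have Hpos := Tpos_mem HpD (ltnW rD) HT.
have HT1 := T1_spec HpD (ltnW rD) HT.
have Hn := nilp_iff Hpos.
have Hsz : size (T pos) <= size (primes m).
  have [uP _] := HT pos HpD.
  apply: uniq_leq_size => // q; rewrite Hpos mem_primes => /and3P [-> _ ->].
  by rewrite andbT; lia.
rewrite /rs_next /= -/(T1of T D pos).
case E1: (m == s).
  move/eqP: E1 => E1; subst s; subst m.
  have HT2 := T2_spec_s HpD rD H11 HT.
  have N := next_Tinv HpD rD HT2.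
  case E2: (pos.+1 %% D == 0); rewrite E2 in N => /=.
  - have pD' : pos.+1 = D.
      case: (ltnP pos.+1 D) => h; last by lia.
      by move: E2; rewrite modn_small.
    rewrite (eqP E2) in N *.
    split; [| done | by rewrite prime_sqF //; lia | by rewrite leq_add2r].
    have r1 : (r.+1 - 1) * (r.+1 - 1) = r * r by rewrite subn1.
    rewrite r1; set M := r * r in Hinv Hpm H2 *.
    split => //; [lia | lia | split => //; try lia].
  - have pD' : pos.+1 < D.
      case: (ltnP pos.+1 D) => h //.
      have E3 : pos.+1 = D by lia.
      by rewrite E3 modnn in E2.
    rewrite (modn_small pD') in N *.
    split; [| done | by rewrite prime_sqF //; lia | by rewrite leq_add2r].
    have r1 : (r.+1 - 1) * (r.+1 - 1) = r * r by rewrite subn1.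
    rewrite r1; set M := r * r in Hinv Hpm H2 *.
    split => //; try lia; split => //; lia.
have ms : m < r * r by move/negbT: E1; rewrite Hs; lia.
have N := next_Tinv HpD (ltnW rD) HT1.
have Hres : nilp (T pos) = prime m.
  apply/idP/idP => H.
    by apply/(proj2 (prime_iff H11 H1 ms))/(proj1 Hn).
  by apply/(proj2 Hn)/(proj1 (prime_iff H11 H1 ms)).
case E2: (pos.+1 %% D == 0); rewrite E2 in N => /=.
- have pD' : pos.+1 = D.
    case: (ltnP pos.+1 D) => h; last by lia.
    by move: E2; rewrite modn_small.
  rewrite (eqP E2) in N *.
  split; [| done | done | by rewrite leq_add2r].
  split => //; try lia. split => //; try lia.
- have pD' : pos.+1 < D.
    case: (ltnP pos.+1 D) => h //.
    have E3 : pos.+1 = D by lia.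
    by rewrite E3 modnn in E2.
  rewrite (modn_small pD') in N *.
  split; [| done | done | by rewrite leq_add2r].
  split => //; try lia; split => //; lia.
Qed.

Lemma isqrt100 : isqrt 100 = 10. Proof. by vm_compute. Qed.

Lemma init_inv : inv (rs_init 100).
Proof.
rewrite /rs_init isqrt100.
split => //; split => //.
move=> j jD.
rewrite (foldl_push_eq (fun p => dist p 100)) cats0; split.
  by rewrite rev_uniq filter_uniq // filter_uniq // iota_uniq.
move=> q; rewrite mem_rev !mem_filter mem_iota add0n /= andbC.
case pq: (prime q) => //=; case qr: (q < 11) => //=.
have := dist_lt 100 (prime_gt0 pq) => dl.
by rewrite add0n (@modn_small _ 13) //; lia.
Qed.

Lemma iter_inv k : inv (rs_iter k (rs_init 100)) /\ rs_m (rs_iter k (rs_init 100)) = 100 + k.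
Proof.
elim: k => [|k [IH1 IH2]]; first by split => //; exact: init_inv.
rewrite /rs_iter iterS -/(rs_iter k _).
move: IH1 IH2; case: (rs_iter k (rs_init 100)) => T D pos m r s /= I Hm.
have [I' Hm' _ _] := step_ok I.
by split => //; rewrite Hm' Hm addnS.
Qed.

Lemma after_iter n i : rs_iter i (rs_after n) = rs_iter (i + (n.+1 - 100)) (rs_init 100).
Proof. by rewrite /rs_after /rs_iter iterD. Qed.

Lemma result_prime n i : 99 <= n -> rs_result (rs_after n) i = prime (n.+1 + i).
Proof.
move=> n99; rewrite /rs_result after_iter.
have [I Hm] := iter_inv (i + (n.+1 - 100)).
move: I Hm; case: (rs_iter _ _) => T D pos m r s I /= Hm.
have [_ _ -> _] := step_ok I.
by rewrite Hm; congr prime; lia.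
Qed.

Lemma cost_step n i : 99 <= n ->
  (rs_next (rs_iter i (rs_after n))).2 <= size (primes (n.+1 + i)) + 1.
Proof.
move=> n99; rewrite after_iter.
have [I Hm] := iter_inv (i + (n.+1 - 100)).
move: I Hm; case: (rs_iter _ _) => T D pos m r s I /= Hm.
have [_ _ _ C] := step_ok I; apply: leq_trans C _.
by rewrite Hm (_ : 100 + (i + (n.+1 - 100)) = n.+1 + i) //; lia.
Qed.


Lemma prod_const_seq (s : seq nat) (P : pred nat) c :
  \prod_(i <- s | P i) c = c ^ count P s.
Proof. by rewrite big_const_seq iter_muln muln1. Qed.

Lemma prod_primes_le m : 0 < m -> \prod_(p <- primes m) p <= m.
Proof.
move=> m0; rewrite {2}(prod_prime_decomp m0) prime_decompE big_map /=.
rewrite big_seq [X in _ <= X]big_seq; apply: leq_prod => p.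
rewrite mem_primes => /and3P [pp _ pm].
rewrite -{1}(expn1 p); apply: leq_pexp2l; first exact: prime_gt0.
by rewrite logn_gt0 mem_primes pp m0 pm.
Qed.

Lemma prod_uniq_ge (s : seq nat) u : 0 < u -> uniq s -> all (fun x => 0 < x) s ->
  u ^ (size s - u) <= \prod_(p <- s) p.
Proof.
move=> u0 us pos.
rewrite (bigID (fun p => p < u)) /=.
have c1 : count (fun p => p < u) s <= u.
  rewrite -size_filter -[X in _ <= X](size_iota 0 u); apply: uniq_leq_size.
    exact: filter_uniq.
  by move=> x; rewrite mem_filter mem_iota add0n => /andP [].
have c2 : size s - u <= count (predC (fun p => p < u)) s.
  by have := count_predC (fun p => p < u) s; lia.
apply: leq_trans (leq_pexp2l u0 c2) _.
rewrite -prod_const_seq -[X in X <= _]mul1n; apply: leq_mul.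
  rewrite big_seq_cond prodn_cond_gt0 // => i /andP [iS _]; exact: (allP pos i iS).
rewrite big_seq_cond [X in _ <= X]big_seq_cond; apply: leq_prod => i /andP [_].
by rewrite /= -leqNgt.
Qed.

Lemma omega_bound m : 0 < m -> 0 < (size (primes m))./2 ->
  ((size (primes m))./2) ^ ((size (primes m))./2) <= m.
Proof.
move=> m0; set t := size (primes m); set u := t./2 => u0.
apply: leq_trans (prod_primes_le m0).
apply: leq_trans (prod_uniq_ge u0 (primes_uniq m) _).
  apply: leq_pexp2l => //; rewrite /u; have := odd_double_half t; lia.
by apply/allP => p; rewrite mem_primes => /and3P [pp _ _]; exact: prime_gt0.
Qed.

Lemma bin_lb k : 2 ^ k <= 'C(k.*2, k).
Proof.
elim: k => // k IH; rewrite doubleS binS binS expnS.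
have := leq_bin2l k (leqnSn k.*2); lia.
Qed.

Lemma sum_le_min N e : \sum_(1 <= j < N.+1) (j <= e) <= minn N e.
Proof.
elim: N => [|N IH]; first by rewrite big_geq.
rewrite big_nat_recr //=; case: (leqP N.+1 e) => H /=; lia.
Qed.

Lemma sum_le_e N e : \sum_(1 <= j < N) (j <= e) <= e.
Proof. case: N => [|N]; first by rewrite big_geq. by have := sum_le_min N e; lia. Qed.

Lemma div2_le k d : 0 < d -> k.*2 %/ d <= (k %/ d).*2.+1.
Proof.
move=> d0; rewrite -ltnS ltn_divLR //.
rewrite {1}(divn_eq k d); have := ltn_pmod k d0; nia.
Qed.

Lemma legendre p k : prime p -> 0 < k -> p ^ logn p 'C(k.*2, k) <= k.*2.
Proof.
move=> pp k0; have p1 := prime_gt1 pp.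
set e := trunc_log p k.*2.
apply: leq_trans (trunc_logP p1 _); last by lia.
apply: leq_pexp2l; first exact: prime_gt0.
have F : logn p (k.*2)`! = logn p 'C(k.*2, k) + (logn p k`! + logn p k`!).
  have kk : k <= k.*2 by lia.
  rewrite -(bin_fact kk) (_ : k.*2 - k = k); last by lia.
  by rewrite lognM ?muln_gt0 ?fact_gt0 ?bin_gt0 // lognM ?fact_gt0.
move: F; rewrite !logn_fact //.
have Sb : \sum_(1 <= j < k.*2.+1) k %/ p ^ j = \sum_(1 <= j < k.+1) k %/ p ^ j.
  have Z : \sum_(k.+1 <= j < k.*2.+1) k %/ p ^ j = 0.
    rewrite big_nat big1 // => j /andP [hj _].
    apply: divn_small; apply: leq_trans hj _; apply: ltnW; exact: ltn_expl.
  rewrite (@big_cat_nat _ _ _ k.+1) //=; last by lia.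
  by rewrite Z addn0.
have Sa : \sum_(1 <= j < k.*2.+1) k.*2 %/ p ^ j <=
   \sum_(1 <= j < k.*2.+1) (k %/ p ^ j) + \sum_(1 <= j < k.*2.+1) (k %/ p ^ j)
   + \sum_(1 <= j < k.*2.+1) (j <= e).
  rewrite -!big_split /=; apply: leq_sum => j _.
  case: (leqP j e) => H.
    have pj : 0 < p ^ j by rewrite expn_gt0 (ltnW p1).
    have := div2_le k pj; lia.
  rewrite divn_small ?addn0 //.
  apply: leq_trans (trunc_log_ltn _ p1) _.
  by apply: leq_pexp2l; [lia | ].
have := sum_le_e k.*2.+1 e.
rewrite Sb in Sa; lia.
Qed.

Lemma pow_big n : 10 <= n -> 2 * (n * n) < 2 ^ n.
Proof.
elim: n => // n IH H.
case: (eqVneq n 9) => [-> // | n9].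
have := IH (ltac:(lia)); rewrite expnS; nia.
Qed.

Lemma gap n : 10 <= n -> exists2 q, prime q & n < q <= 2 * (n * n).
Proof.
move=> n10.
case Hb: (has (fun q => prime q && (n < q)) (iota 0 (2 * (n * n)).+1)).
  case/hasP: Hb => q; rewrite mem_iota add0n => /andP [_ qle] /andP [pq nq].
  by exists q => //; rewrite nq -ltnS.
exfalso; move/hasPn: Hb => Hb.
set k := n * n.
have k0 : 0 < k by lia.
set C := 'C(k.*2, k).
have C0 : 0 < C by rewrite bin_gt0; lia.
have Hp : forall p, p \in primes C -> p <= n.
  move=> p; rewrite mem_primes => /and3P [pp _ pC].
  have h1 := legendre pp k0.
  have h2 : p <= p ^ logn p C.
    rewrite -{1}(expn1 p); apply: leq_pexp2l; first exact: prime_gt0.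
    by rewrite logn_gt0 mem_primes pp C0 pC.
  have h3 : p < (2 * (n * n)).+1 by rewrite ltnS; apply: leq_trans h2 (leq_trans h1 _); rewrite /k; lia.
  have := Hb p; rewrite mem_iota add0n h3 pp /= => /(_ isT); lia.
have sz : size (primes C) <= n.
  rewrite -[X in _ <= X](size_iota 1 n); apply: uniq_leq_size; first exact: primes_uniq.
  move=> p pC; rewrite mem_iota; have := Hp p pC.
  move: pC; rewrite mem_primes => /and3P [pp _ _]; have := prime_gt0 pp; lia.
have up : C <= (k.*2) ^ n.
  rewrite {1}(prod_prime_decomp C0) prime_decompE big_map /=.
  apply: (@leq_trans ((k.*2) ^ size (primes C))); last by apply: leq_pexp2l; lia.
  rewrite -(count_predT (primes C)) -prod_const_seq big_seq [X in _ <= X]big_seq.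
  apply: leq_prod => p; rewrite mem_primes => /and3P [pp _ _]; exact: legendre.
have lo := bin_lb k.
have : 2 ^ k <= (k.*2) ^ n by apply: leq_trans lo (leq_trans _ up).
rewrite /k expnM leqNgt ltn_exp2r; last by lia.
by rewrite (_ : (n * n).*2 = 2 * (n * n)) ?pow_big //; lia.
Qed.


From Stdlib Require Import Reals Lra.

Section RealPart.
Local Open Scope R_scope.

Lemma ln_le_sub1 w : 0 < w -> ln w <= w - 1.
Proof. move=> w0; have := exp_ineq1_le (ln w); rewrite exp_ln //; lra. Qed.

Lemma ln2_lt1 : ln 2 < 1.
Proof.
have h : 1 + 1 < exp 1 by apply: exp_ineq1; lra.
by have := ln_increasing 2 (exp 1) ltac:(lra) h; rewrite ln_exp.
Qed.

Lemma ln_half z : 0 < z -> ln z < z / 2.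
Proof.
move=> z0; have -> : ln z = ln 2 + ln (z / 2).
  rewrite -ln_mult; [congr ln; field | lra | lra].
have := @ln_le_sub1 (z / 2) ltac:(lra); have := ln2_lt1; lra.
Qed.

Lemma ln_le_mono a b : 0 < a -> a <= b -> ln a <= ln b.
Proof. move=> a0 [ab|<-]; [left; exact: ln_increasing | lra]. Qed.

Lemma INR_expn a b : INR (expn a b) = INR a ^ b.
Proof.
elim: b => [|b IH]; first by [].
by rewrite expnS mult_INR IH /=.
Qed.

Lemma real_bound (n u : nat) : (100 <= n)%nat -> (1 <= u)%nat -> (expn u u <= expn n 3)%nat ->
  INR u <= 6 * (ln (INR n) / ln (ln (INR n))).
Proof.
move=> n100 u1 uu.
have x100 : 100 <= INR n by have := le_INR 100 n (ltac:(apply/leP; exact n100)); rewrite /= => h; lra.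
set x := INR n in x100 *.
have L1 : 1 < ln x.
  have := ln_increasing (exp 1) x (exp_pos 1) ltac:(have := exp_le_3; lra).
  by rewrite ln_exp.
set L := ln x in L1 *.
have lL0 : 0 < ln L by have := ln_increasing 1 L ltac:(lra) L1; rewrite ln_1.
set lL := ln L in lL0 *.
have lLL : lL < L by have := @ln_half L ltac:(lra); rewrite -/lL; lra.
have U1 : 1 <= INR u by have := le_INR 1 u (ltac:(apply/leP; exact u1)); rewrite /=; lra.
apply: (Rmult_le_reg_r lL) => //.
have -> : 6 * (L / lL) * lL = 6 * L by field; lra.
case: (eqVneq u 1%nat) => [-> | un1].
  rewrite /=; lra.
have U2 : 2 <= INR u.
  have := le_INR 2 u (ltac:(apply/leP; lia)); rewrite /=; lra.
set U := INR u in U1 U2 *.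
have HU : U * ln U <= 3 * L.
  have h : INR (expn u u) <= INR (expn n 3) by apply: le_INR; apply/leP.
  rewrite !INR_expn in h.
  have := ln_le_mono (pow_lt U u ltac:(lra)) h.
  have xp : 0 < INR n by rewrite -/x; lra.
  have up : 0 < INR u by rewrite -/U; lra.
  rewrite !ln_pow //.
  by rewrite /U /L /x /=; lra.
have Ul : 0 < ln U by have := ln_increasing 1 U ltac:(lra) ltac:(lra); rewrite ln_1.
apply Rnot_lt_le; move=> H.
set y := 6 * L / lL.
have y0 : 0 < y by rewrite /y; apply: Rdiv_lt_0_compat; lra.
have Uy : y < U.
  rewrite /y; apply: (Rmult_lt_reg_r lL) => //.
  have -> : 6 * L / lL * lL = 6 * L by field; lra.
  lra.
have lny : lL / 2 <= ln y.
  have -> : ln y = ln 6 + ln L - ln lL.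
    rewrite /y /Rdiv ln_mult ?ln_mult ?ln_Rinv; try lra.
    by apply: Rinv_0_lt_compat.
  have := @ln_half lL lL0.
  have : 0 < ln 6 by have := ln_increasing 1 6 ltac:(lra) ltac:(lra); rewrite ln_1.
  rewrite -/lL; lra.
have lnUy : ln y < ln U by apply: ln_increasing.
have yl : y * lL = 6 * L by rewrite /y; field; lra.
nra.
Qed.

End RealPart.

Lemma ratio_ge1 n : (100 <= n)%nat -> (1 <= ln (INR n) / ln (ln (INR n)))%R.
Proof.
move=> n100.
have x100 : (100 <= INR n)%R by have := le_INR 100 n (ltac:(apply/leP; exact n100)); rewrite /= => h; lra.
have L1 : (1 < ln (INR n))%R.
  have := ln_increasing (exp 1) (INR n) (exp_pos 1) ltac:(have := exp_le_3; lra).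
  by rewrite ln_exp.
have lL0 : (0 < ln (ln (INR n)))%R by have := ln_increasing 1 _ ltac:(lra) L1; rewrite ln_1.
have lLL : (ln (ln (INR n)) < ln (INR n))%R by have := @ln_half (ln (INR n)) ltac:(lra); lra.
apply: (Rmult_le_reg_r (ln (ln (INR n)))) => //.
rewrite Rmult_1_l /Rdiv Rmult_assoc Rinv_l; lra.
Qed.

Lemma sum_INR_le (f : nat -> nat) k B : (forall i, (i < k)%nat -> (INR (f i) <= B)%R) ->
  (INR (\sum_(i < k) f i) <= INR k * B)%R.
Proof.
elim: k => [|k IH] H; first by rewrite big_ord0 /=; lra.
rewrite big_ord_recr plus_INR S_INR.
rewrite Rmult_plus_distr_r Rmult_1_l.
have := IH (fun i hi => H i (ltnW hi)); have := H k (ltnSn k); rewrite /=; lra.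
Qed.

Lemma term_bound n i : (100 <= n)%nat -> (n.+1 + i <= 2 * (n * n))%nat ->
  (INR ((rs_next (rs_iter i (rs_after n))).2) <= 14 * (ln (INR n) / ln (ln (INR n))))%R.
Proof.
move=> n100 hm.
have Q := ratio_ge1 n100.
set R0 := (ln (INR n) / ln (ln (INR n)))%R in Q *.
have hc := cost_step i (ltac:(lia) : (99 <= n)%nat).
apply: Rle_trans (le_INR _ _ (elimT leP hc)) _.
set m := (n.+1 + i)%nat in hm hc *.
set t := size (primes m).
have ht := odd_double_half t.
case: (posnP t./2) => [u0|u0].
  have : (t + 1 <= 2)%nat by rewrite u0 in ht; move: ht; case: (odd t) => /=; lia.
  move/leP/le_INR; rewrite /=; lra.
have hu := omega_bound (ltac:(lia) : (0 < m)%nat) u0.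
have hu3 : (expn t./2 t./2 <= expn n 3)%nat.
  apply: leq_trans hu _; apply: leq_trans hm _; rewrite expnS expnS expn1; nia.
have := real_bound n100 u0 hu3; rewrite -/R0 => hr.
have : (t + 1 <= t./2 + t./2 + 2)%nat by move: ht; case: (odd t) => /=; lia.
move/leP/le_INR; rewrite !plus_INR /= => h2.
lra.
Qed.

Theorem theorem3 :
  exists (C D : R) (N : nat), (100 <= N)%nat /\ forall n p : nat,
    (N <= n)%nat ->
    n < p -> prime p -> (forall q, n < q < p -> ~~ prime q) ->
    exists k : nat,
      [/\ (0 < k)%nat,
          rs_result (rs_after n) k.-1,
          (forall i, (i < k.-1)%nat -> ~~ rs_result (rs_after n) i) &
          (INR (rs_cost (rs_after n) k)
             <= INR (p - n) * C * (ln (INR n) / ln (ln (INR n))) + D)%R].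
Proof.
exists 14%R, 0%R, 100%nat; split => // n p n100 np pp Hgap.
have n99 : (99 <= n)%nat by lia.
have pb : (p <= 2 * (n * n))%nat.
  have [q pq /andP [nq qb]] := gap (ltac:(lia) : (10 <= n)%nat).
  case: (leqP p q) => h; first by apply: leq_trans h qb.
  by have := Hgap q; rewrite nq h pq => /(_ isT).
exists (p - n)%nat; split.
- lia.
- by rewrite result_prime // (_ : n.+1 + (p - n).-1 = p)%nat //; lia.
- move=> i Hi; rewrite result_prime //; apply: Hgap; apply/andP; split; lia.
- rewrite /rs_cost Rplus_0_r Rmult_assoc.
  apply: (@sum_INR_le (fun i => (rs_next (rs_iter i (rs_after n))).2)) => i Hi.
  apply: term_bound => //; lia.
Qed.
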